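(* Let $K\ge 2$, $\mathbf{V}\in\mathbb{C}^{n\times r}$, and let $\tilde{\mathbf{V}}\in\mathbb{R}^{B_Kn\times 2r}$ and the coordinate groups $\mathcal{G}^{(i)}$ be as in the context. If $\mathcal{I}\subset[B_Kn]$ with $|\mathcal{I}|=2r-1$ contains three or more indices from the same coordinate group $\mathcal{G}^{(i)}$, then $\mathrm{rank}(\tilde{\mathbf{V}}_{\mathcal{I},:})<2r-1$.
   Context: $B_K=K/2$ if $K$ is even and $B_K=K$ if $K$ is odd; $\rho_m=e^{-\mathrm{i}\pi(2m+1)/K}$ for $m\in\{0,\dots,B_K-1\}$. $\tilde{\mathbf{V}}$ has rows indexed by $j=i+mn$ ($i\in[n]$, $m\in\{0,\dots,B_K-1\}$), and row $j$ equals $[\mathrm{Re}(\rho_m\mathbf{V}_{i,:}),\ \mathrm{Im}(\rho_m\mathbf{V}_{i,:})]\in\mathbb{R}^{2r}$. The coordinate group $\mathcal{G}^{(i)}$ is the set of row indices $\{i,i+n,\dots,i+(B_K-1)n\}$. $\tilde{\mathbf{V}}_{\mathcal{I},:}$ is the submatrix of rows indexed by $\mathcal{I}$. *)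

(* Defs.v *)
From mathcomp Require Import all_boot all_order all_algebra.
From mathcomp Require Import reals trigo.
From mathcomp Require Import complex.
Set Implicit Arguments. Unset Strict Implicit. Unset Printing Implicit Defensive.
Import GRing.Theory Num.Theory.
Local Open Scope ring_scope.

Definition BK (K : nat) : nat := if odd K then K else K./2.

(* rho_m = exp(-i pi (2m+1)/K) = cos(pi(2m+1)/K) - i sin(pi(2m+1)/K) *)
Definition rho (R : realType) (K m : nat) : R[i] :=
  let t := pi * (2 * m + 1)%:R / K%:R in
  complex.Complex (cos t) (- sin t).

Definition cRe (R : realType) (z : R[i]) : R := complex.Re z.
Definition cIm (R : realType) (z : R[i]) : R := complex.Im z.

Lemma ltn_mod_ord (b n : nat) (j : 'I_(b * n)) : (j %% n < n)%N.
Proof.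
rewrite ltn_mod; case: n j => [|//] j.
by case: j => j /=; rewrite muln0.
Qed.

Definition jcoord (b n : nat) (j : 'I_(b * n)) : 'I_n := Ordinal (ltn_mod_ord j).

(* Vtilde : rows j = i + m n (i < n, m < B_K), i.e. i = j mod n, m = j div n;
   row j = [Re(rho_m V_{i,:}), Im(rho_m V_{i,:})]. *)
Definition Vtilde (R : realType) (K n r : nat) (V : 'M[R[i]]_(n, r))
  : 'M[R]_(BK K * n, r + r) :=
  row_mx
    (\matrix_(j < BK K * n, k < r)
       cRe (rho R K (j %/ n) * V (jcoord j) k))
    (\matrix_(j < BK K * n, k < r)
       cIm (rho R K (j %/ n) * V (jcoord j) k)).

Definition coord_group (K n : nat) (i : 'I_n) : {set 'I_(BK K * n)} :=
  [set j : 'I_(BK K * n) | (j %% n)%N == i].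

Definition subrows (F : Type) (N c : nat) (I : {set 'I_N}) (A : 'M[F]_(N, c))
  : 'M[F]_(#|I|, c) := rowsub (fun k : 'I_#|I| => enum_val k) A.

(* Main.v *)
Require Import Defs.
From mathcomp Require Import all_boot all_order all_algebra.
From mathcomp Require Import reals trigo.
From mathcomp Require Import complex.
From mathcomp Require Import ring zify.
Import GRing.Theory Num.Theory.
Local Open Scope ring_scope.

Lemma cmul_parts (R : realType) (c s : R) (v : R[i]) :
  cRe (complex.Complex c (- s) * v) = c * complex.Re v + s * complex.Im v /\
  cIm (complex.Complex c (- s) * v) = c * complex.Im v + s * (- complex.Re v).
Proof.
case: v => a b /=; rewrite /cRe /cIm /=; split; ring.
Qed.

Lemma rank_bigadds (F : fieldType) (I : finType) (P : pred I) n (B : I -> 'M[F]_n) :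
  (\rank (\big[addsmx/(0%R : 'M[F]_n)]_(i | P i) B i) <= \sum_(i | P i) \rank (B i))%N.
Proof.
apply: (big_ind2 (fun M k => \rank M <= k)%N).
- by rewrite mxrank0.
- move=> M1 k1 M2 k2 h1 h2; apply: leq_trans (mxrank_adds_leqif M1 M2) _.
  exact: leq_add.
- by [].
Qed.

Lemma rank_sub_sum (F : fieldType) m n (S : 'M[F]_(m, n)) :
  (S <= \big[addsmx/(0%R : 'M[F]_n)]_(k : 'I_m) <<row k S>>)%MS.
Proof.
apply/row_subP => k; apply: (sumsmx_sup k) => //; by rewrite genmxE.
Qed.

Theorem lemma8 (R : realType) (K n r : nat) (V : 'M[R[i]]_(n, r))
  (I : {set 'I_(BK K * n)}) :
  (2 <= K)%N ->
  #|I| = (2 * r - 1)%N ->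
  (exists i : 'I_n, 3 <= #|I :&: coord_group K i|)%N ->
  (\rank (subrows I (Vtilde K V)) < 2 * r - 1)%N.
Proof.
move=> _ hI [i hi].
set A := Vtilde K V.
set S := subrows I A.
set G := coord_group K i.
pose g := fun k : 'I_#|I| => enum_val k \in G.
pose a := \row_c cRe (V i c); pose b := \row_c cIm (V i c).
pose W := col_mx (row_mx a b) (row_mx b (- a)).
have rowG : forall k, g k -> (row k S <= W)%MS.
  move=> k; rewrite /g /G /coord_group inE => /eqP hj.
  rewrite /S /subrows row_rowsub.
  set j := enum_val k.
  pose t : R := pi * (2 * (j %/ n)%N + 1)%:R / K%:R.
  suff -> : row j A = row_mx (cos t)%:M (sin t)%:M *m W by apply: submxMl.
  rewrite mul_row_col !mul_scalar_mx.
  have ej : jcoord j = i by apply: val_inj.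
  rewrite /A /Vtilde row_row_mx !scale_row_mx add_row_mx.
  have hc := cmul_parts R (cos t) (sin t).
  congr row_mx; apply/rowP => c; rewrite !mxE ej.
    exact: (proj1 (hc _)).
  exact: (proj2 (hc _)).
have sumG : (\rank (\big[addsmx/(0%R : 'M[R]_(r + r))]_(k | true && g k) <<row k S>>)%MS <= 2)%N.
  apply: (leq_trans _ (rank_leq_row W)).
  apply: mxrankS; apply/sumsmx_subP => k /= gk; rewrite genmxE; exact: rowG.
have sumN : (\rank (\big[addsmx/(0%R : 'M[R]_(r + r))]_(k | true && ~~ g k) <<row k S>>)%MS <= #|[pred k | ~~ g k]|)%N.
  apply: leq_trans (rank_bigadds _ _ _ _ _) _.
  apply: (@leq_trans (\sum_(k | true && ~~ g k) 1%N)).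
    by apply: leq_sum => k _; rewrite mxrank_gen rank_leq_row.
  by rewrite sum1_card.
have cardg : (#|I :&: G| <= #|[pred k | g k]|)%N.
  rewrite -(card_imset _ (@enum_val_inj _ (mem I))).
  apply: subset_leq_card; apply/subsetP => x; rewrite inE => /andP[xI xG].
  apply/imsetP; exists (enum_rank_in xI x); by rewrite ?inE /g (enum_rankK_in xI xI).
have := cardC [pred k | g k].
have hS : (S <= \big[addsmx/(0%R : 'M[R]_(r + r))]_(k : 'I_#|I|) <<row k S>>)%MS := rank_sub_sum _ _ _ S.
rewrite (bigID g) /= in hS.
have := mxrankS hS.
have := mxrank_adds_leqif (\big[addsmx/(0%R : 'M[R]_(r + r))]_(k | true && g k) <<row k S>>)%MS (\big[addsmx/(0%R : 'M[R]_(r + r))]_(k | true && ~~ g k) <<row k S>>)%MS.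
move=> [h1 _] h2 h3.
have e : #|[predC [pred k | g k]]| = #|[pred k | ~~ g k]| by apply: eq_card.
rewrite e card_ord in h3.
have h2' := leq_trans h2 h1.
have hi' : (2 < #|I :&: G|)%N := hi.
move: h2' sumG sumN cardg h3 hi' hI.
set x1 := \rank S.
set x2 := \rank (\big[addsmx/(0%R : 'M[R]_(r + r))]_(k | true && g k) <<row k S>>)%MS.
set x3 := \rank (\big[addsmx/(0%R : 'M[R]_(r + r))]_(k | true && ~~ g k) <<row k S>>)%MS.
move=> h2a h2b h2c h2d h2e h2f h2g.
move: h2a h2b h2c h2d h2e h2f h2g.
set c1 := #|[pred k | g k]|. set c2 := #|[pred k | ~~ g k]|. set c3 := #|I :&: G|. set c4 := #|I|.
clearbody x1 x2 x3 c1 c2 c3 c4; clear -x1 x2 x3 c1 c2 c3 c4.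
move=> ha hb hc hd he hf hg.
have : (x1 <= 2 + c2)%N by apply: (leq_trans ha); apply: leq_add.
change nat in x1; move=> h; lia.
Qed.
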